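(* Let $t>0$ and let $u_1,\dots,u_n,v_1,\dots,v_n$ be unit vectors in $\mathbb R^d$. For $m\in[n]$ define the InfoNCE loss $$\mathcal L_{\mathrm{InfoNCE}}(U_{[m]},V_{[m]})=\frac1{2m}\sum_{i\in[m]}\log\Big(1+\sum_{j\in[m]\setminus\{i\}}\exp\big((v_j-v_i)^\top u_i/t\big)\Big)+\frac1{2m}\sum_{i\in[m]}\log\Big(1+\sum_{j\in[m]\setminus\{i\}}\exp\big((u_j-u_i)^\top v_i/t\big)\Big),$$ regarded as a function of the similarities $u_k^\top v_l$ ($k,l\in[m]$) as independent variables. Then for any integers $m_1\le m_2$ in $[n]$ and any distinct indices $i\ne j\in[m_1]$, $$0\le\frac{\partial}{\partial(u_i^\top v_j)}\mathcal L_{\mathrm{InfoNCE}}(U_{[m_2]},V_{[m_2]})\le\frac{\partial}{\partial(u_i^\top v_j)}\mathcal L_{\mathrm{InfoNCE}}(U_{[m_1]},V_{[m_1]}),$$ and the second inequality is an equality if and only if $m_1=m_2$.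
   Context: $[m]=\{1,\dots,m\}$ and $(U_{[m]},V_{[m]})=\{(u_i,v_i):i\in[m]\}$. This loss is the symmetric InfoNCE-based loss $\frac12\mathcal L_{\mathrm{info}}(U,V)+\frac12\mathcal L_{\mathrm{info}}(V,U)$ with $\mathcal L_{\mathrm{info}}(U,V)=\frac1m\sum_i\psi\big(\sum_{j\ne i}\phi((v_j-v_i)^\top u_i)\big)$, $\phi(x)=\exp(x/t)$, $\psi(x)=\log(1+x)$. *)

(* Defs.v *)
From mathcomp Require Import all_boot all_order all_algebra.
From mathcomp Require Import all_classical all_reals all_analysis.
Set Implicit Arguments. Unset Strict Implicit. Unset Printing Implicit Defensive.
Import Order.TTheory GRing.Theory Num.Theory.
Local Open Scope ring_scope.

(* R : realType.
   Indices are 0-based naturals: the paper's [m] = {1..m} becomes {0..m-1}. *)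

Definition dotp (R : realType) (d : nat) (x y : 'rV[R]_d) : R :=
  \sum_(k < d) x ord0 k * y ord0 k.

(* Symmetric InfoNCE loss on the first m pairs, written as a function of the
   similarity array S k l = u_k^T v_l (treated as independent variables). *)
Definition infonce (R : realType) (t : R) (m : nat) (S : nat -> nat -> R) : R :=
  (2 * m%:R)^-1 * \sum_(i < m)
      ln (1 + \sum_(j < m | j != i) expR ((S i j - S i i) / t))
  + (2 * m%:R)^-1 * \sum_(i < m)
      ln (1 + \sum_(j < m | j != i) expR ((S j i - S i i) / t)).

Definition upd (R : realType) (S : nat -> nat -> R) (i j : nat) (x : R) :
  nat -> nat -> R :=
  fun k l => if (k == i) && (l == j) then x else S k l.

Definition dinfonce (R : realType) (t : R) (m : nat) (S : nat -> nat -> R)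
  (i j : nat) : R :=
  derive1 (fun x : R => infonce t m (upd S i j x)) (S i j).

Definition simil (R : realType) (d : nat) (u v : nat -> 'rV[R]_d) :
  nat -> nat -> R := fun k l => dotp (u k) (v l).

(* Main.v *)
Require Import Defs.
From mathcomp Require Import all_boot all_order all_algebra.
From mathcomp Require Import all_classical all_reals all_analysis.
Import Order.TTheory GRing.Theory Num.Theory.
Local Open Scope ring_scope.
From mathcomp Require Import ring lra.

Section S.
Variable R : realType.
Variable t : R.

Definition aa (m : nat) (S : nat -> nat -> R) i j : R :=
  \sum_(k < m | (nat_of_ord k != i)%N && (nat_of_ord k != j)%N) expR ((S i k - S i i) / t).
Definition bb (m : nat) (S : nat -> nat -> R) i j : R :=
  \sum_(k < m | (nat_of_ord k != j)%N && (nat_of_ord k != i)%N) expR ((S k j - S j j) / t).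

Lemma half1 m S i j (Hi : (i < m)%N) (Hj : (j < m)%N) : i != j -> forall x,
  \sum_(k < m) ln (1 + \sum_(l < m | l != k) expR ((upd S i j x k l - upd S i j x k k) / t))
  = \sum_(k < m | (nat_of_ord k != i)%N) ln (1 + \sum_(l < m | l != k) expR ((S k l - S k k) / t))
    + ln (1 + aa m S i j + expR ((x - S i i) / t)).
Proof.
move=> nij x.
rewrite (bigD1 (Ordinal Hi)) //= addrC; congr (_ + _).
  apply: eq_big => // k nki.
  by congr (ln (1 + _)); apply: eq_bigr => l _; rewrite /upd (negbTE (nki : (nat_of_ord k != i)%N)) /=.
have Hji : Ordinal Hj != Ordinal Hi by rewrite -val_eqE /= eq_sym.
rewrite (bigD1 (Ordinal Hj)) //=; rewrite /upd !eqxx /= (negbTE nij) addrCA addrC.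
congr (ln (1 + _ + _)).
rewrite /aa; apply: eq_big => // l.
by move=> /andP [_ nlj]; rewrite (negbTE (nlj : (nat_of_ord l != j)%N)).
Qed.

Lemma half2 m S i j (Hi : (i < m)%N) (Hj : (j < m)%N) : i != j -> forall x,
  \sum_(k < m) ln (1 + \sum_(l < m | l != k) expR ((upd S i j x l k - upd S i j x k k) / t))
  = \sum_(k < m | (nat_of_ord k != j)%N) ln (1 + \sum_(l < m | l != k) expR ((S l k - S k k) / t))
    + ln (1 + bb m S i j + expR ((x - S j j) / t)).
Proof.
move=> nij x.
rewrite (bigD1 (Ordinal Hj)) //= addrC; congr (_ + _).
  apply: eq_big => // k nkj.
  by congr (ln (1 + _)); apply: eq_bigr => l _; rewrite /upd (negbTE (nkj : (nat_of_ord k != j)%N)) !andbF.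
have Hij : Ordinal Hi != Ordinal Hj by rewrite -val_eqE /=.
rewrite (bigD1 (Ordinal Hi)) //=; rewrite /upd !eqxx /= (eq_sym j i) (negbTE nij) addrCA addrC.
congr (ln (1 + _ + _)).
rewrite /bb; apply: eq_big => // l.
by move=> /andP [_ nli]; rewrite (negbTE (nli : (nat_of_ord l != i)%N)).
Qed.
Lemma dlin (p x : R) : is_derive x 1 (fun y : R => (y - p) / t) t^-1.
Proof.
have -> : (fun y : R => (y - p) / t) = t^-1 *: (id \- cst p).
  by apply/funext => y /=; rewrite mulrC.
apply: is_derive_eq.
by rewrite subr0 scaler1.
Qed.

Lemma dexp (p x : R) : is_derive x 1 (fun y : R => expR ((y - p) / t)) (expR ((x - p)/t) * t^-1).
Proof.
have -> : (fun y : R => expR ((y - p) / t)) = expR \o (fun y : R => (y - p) / t) by [].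
apply: is_derive1_comp; last exact: dlin.
Qed.

Lemma dlog (K p x : R) : 0 < K -> is_derive x 1 (fun y : R => ln (K + expR ((y - p)/t)))
   ((K + expR((x-p)/t))^-1 * (expR((x-p)/t) * t^-1)).
Proof.
move=> K0.
have -> : (fun y : R => ln (K + expR ((y - p)/t))) = (@ln R) \o (fun y => K + expR ((y - p)/t)) by [].
apply: is_derive1_comp.
  apply: is_derive1_ln; by rewrite addr_gt0 // expR_gt0.
have -> : (fun y => K + expR ((y - p)/t)) = cst K \+ (fun y => expR ((y - p)/t)) by [].
apply: is_derive_eq. rewrite add0r scaler0 add0r subr0; congr (_ * _); exact: mulr1.
Qed.

Lemma dg (C c K1 K2 p q x : R) : 0 < K1 -> 0 < K2 ->
  is_derive x 1 (fun y : R => C + c * ln (K1 + expR ((y - p)/t)) + c * ln (K2 + expR ((y - q)/t)))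
  (c * ((K1 + expR((x-p)/t))^-1 * (expR((x-p)/t) * t^-1)) + c * ((K2 + expR((x-q)/t))^-1 * (expR((x-q)/t) * t^-1))).
Proof.
move=> H1 H2.
have -> : (fun y : R => C + c * ln (K1 + expR ((y - p)/t)) + c * ln (K2 + expR ((y - q)/t)))
  = cst C \+ c *: (fun y => ln (K1 + expR ((y - p)/t))) \+ c *: (fun y => ln (K2 + expR ((y - q)/t))) by [].
have h1 := dlog K1 p x H1. have h2 := dlog K2 q x H2.
apply: is_derive_eq.
by rewrite add0r.
Qed.

Lemma dval m S i j (Hi : (i < m)%N) (Hj : (j < m)%N) : i != j ->
  dinfonce t m S i j =
  (2 * m%:R)^-1 * ((1 + aa m S i j + expR ((S i j - S i i)/t))^-1 * (expR ((S i j - S i i)/t) * t^-1))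
  + (2 * m%:R)^-1 * ((1 + bb m S i j + expR ((S i j - S j j)/t))^-1 * (expR ((S i j - S j j)/t) * t^-1)).
Proof.
move=> nij.
rewrite /dinfonce.
set c := (2 * m%:R)^-1.
set C := c * \sum_(k < m | (nat_of_ord k != i)%N) ln (1 + \sum_(l < m | l != k) expR ((S k l - S k k) / t))
  + c * \sum_(k < m | (nat_of_ord k != j)%N) ln (1 + \sum_(l < m | l != k) expR ((S l k - S k k) / t)).
have -> : (fun x => infonce t m (upd S i j x)) = (fun y : R => C + c * ln ((1 + aa m S i j) + expR ((y - S i i)/t)) + c * ln ((1 + bb m S i j) + expR ((y - S j j)/t))).
  apply/funext => y; rewrite /infonce half1 // half2 // /C -/c; ring.
have a0 : 0 <= aa m S i j by apply: sumr_ge0 => k _; exact: expR_ge0.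
have b0 : 0 <= bb m S i j by apply: sumr_ge0 => k _; exact: expR_ge0.
rewrite derive1E.
have k1 : 0 < 1 + aa m S i j by lra.
have k2 : 0 < 1 + bb m S i j by lra.
have [_ ->] := dg C c (1 + aa m S i j) (1 + bb m S i j) (S i i) (S j j) (S i j) k1 k2.
by [].
Qed.

Lemma sum_mono (P : pred nat) (f : nat -> R) m1 m2 : (m1 <= m2)%N -> (forall k, 0 <= f k) ->
  \sum_(k < m1 | P k) f k <= \sum_(k < m2 | P k) f k.
Proof.
move=> le f0; rewrite -!(big_mkord P f) (big_cat_nat (leq0n m1) le) /=.
by rewrite lerDl; apply: sumr_ge0 => k _.
Qed.

Lemma inv_anti (x y w : R) : 0 < x -> x <= y -> 0 <= w -> y^-1 * w <= x^-1 * w.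
Proof.
move=> x0 xy w0; apply: ler_wpM2r => //.
by rewrite lef_pV2 // posrE // (lt_le_trans x0 xy).
Qed.

Lemma key (c1 c2 a1 a2 b1 b2 e1 e2 : R) : 0 < t -> 0 < e1 -> 0 < e2 -> 0 <= a1 -> a1 <= a2 ->
  0 <= b1 -> b1 <= b2 -> 0 < c2 -> c2 <= c1 ->
  0 <= c2*((1+a2+e1)^-1*(e1*t^-1)) + c2*((1+b2+e2)^-1*(e2*t^-1)) /\
  c2*((1+a2+e1)^-1*(e1*t^-1)) + c2*((1+b2+e2)^-1*(e2*t^-1)) <=
  c1*((1+a1+e1)^-1*(e1*t^-1)) + c1*((1+b1+e2)^-1*(e2*t^-1)) /\
  (c2 < c1 -> c2*((1+a2+e1)^-1*(e1*t^-1)) + c2*((1+b2+e2)^-1*(e2*t^-1)) <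
  c1*((1+a1+e1)^-1*(e1*t^-1)) + c1*((1+b1+e2)^-1*(e2*t^-1))).
Proof.
move=> t0 e10 e20 a10 a12 b10 b12 c20 c21.
have hX : (1+a2+e1)^-1*(e1*t^-1) <= (1+a1+e1)^-1*(e1*t^-1).
  apply: inv_anti; [lra | lra | ]. by rewrite mulr_ge0 // ?invr_ge0 ltW.
have hY : (1+b2+e2)^-1*(e2*t^-1) <= (1+b1+e2)^-1*(e2*t^-1).
  apply: inv_anti; [lra | lra | ]. by rewrite mulr_ge0 // ?invr_ge0 ltW.
have pX : 0 < (1+a2+e1)^-1*(e1*t^-1).
  by rewrite mulr_gt0 // ?invr_gt0 ?mulr_gt0 // ?invr_gt0 //; lra.
have pY : 0 < (1+b2+e2)^-1*(e2*t^-1).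
  by rewrite mulr_gt0 // ?invr_gt0 ?mulr_gt0 // ?invr_gt0 //; lra.
move: hX hY pX pY.
set X2 := (1+a2+e1)^-1*(e1*t^-1). set X1 := (1+a1+e1)^-1*(e1*t^-1).
set Y2 := (1+b2+e2)^-1*(e2*t^-1). set Y1 := (1+b1+e2)^-1*(e2*t^-1).
move=> hX hY pX pY.
split; first nra.
split; first nra.
move=> c21'; nra.
Qed.
End S.

Theorem theorem5p6 (R : realType) (t : R) (d n : nat)
    (u v : nat -> 'rV[R]_d) :
  0 < t ->
  (forall k, (k < n)%N -> dotp (u k) (u k) = 1 /\ dotp (v k) (v k) = 1) ->
  forall m1 m2 i j : nat,
    (0 < m1)%N -> (m1 <= m2)%N -> (m2 <= n)%N ->
    (i < m1)%N -> (j < m1)%N -> i <> j ->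
    0 <= dinfonce t m2 (simil u v) i j /\
    dinfonce t m2 (simil u v) i j <= dinfonce t m1 (simil u v) i j /\
    (dinfonce t m2 (simil u v) i j = dinfonce t m1 (simil u v) i j
       <-> m1 = m2).
Proof.
move=> t0 _ m1 m2 i j m10 m12 _ im1 jm1 nij.
have nij' : i != j by apply/eqP.
have im2 : (i < m2)%N := leq_trans im1 m12.
have jm2 : (j < m2)%N := leq_trans jm1 m12.
rewrite (@dval R t m2 (simil u v) i j im2 jm2 nij') (@dval R t m1 (simil u v) i j im1 jm1 nij').
have c2p : 0 < (2 * m2%:R : R)^-1.
  by rewrite invr_gt0 mulr_gt0 // ltr0n (leq_trans m10 m12).
have c12 : (2 * m2%:R : R)^-1 <= (2 * m1%:R)^-1.
  rewrite lef_pV2 ?posrE ?mulr_gt0 ?ltr0n // ?(leq_trans m10 m12) //.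
  by rewrite ler_pM2l // ler_nat.
have c12s : (m1 < m2)%N -> (2 * m2%:R : R)^-1 < (2 * m1%:R)^-1.
  move=> lt; rewrite ltf_pV2 ?posrE ?mulr_gt0 ?ltr0n // ?(leq_trans m10 m12) //.
  by rewrite ltr_pM2l // ltr_nat.
have a1 : 0 <= @aa R t m1 (simil u v) i j by apply: sumr_ge0 => k _; exact: expR_ge0.
have b1 : 0 <= @bb R t m1 (simil u v) i j by apply: sumr_ge0 => k _; exact: expR_ge0.
have a12 : @aa R t m1 (simil u v) i j <= @aa R t m2 (simil u v) i j.
  exact: (@sum_mono R (fun k => (k != i) && (k != j))
     (fun k => expR ((simil u v i k - simil u v i i) / t)) m1 m2 m12 (fun k => expR_ge0 _)).
have b12 : @bb R t m1 (simil u v) i j <= @bb R t m2 (simil u v) i j.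
  exact: (@sum_mono R (fun k => (k != j) && (k != i))
     (fun k => expR ((simil u v k j - simil u v j j) / t)) m1 m2 m12 (fun k => expR_ge0 _)).
have [H1 [H2 H3]] := @key R t _ _ _ _ _ _ _ _ t0 (expR_gt0 ((simil u v i j - simil u v i i) / t)) (expR_gt0 ((simil u v i j - simil u v j j) / t)) a1 a12 b1 b12 c2p c12.
split => //; split => //; split => [Heq|->//].
case: (ltngtP m1 m2) => // [lt|gt]; last by move: (leq_trans gt m12); rewrite ltnn.
by move: (H3 (c12s lt)); rewrite Heq ltxx.
Qed.
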